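(* Let $p\in\mathbb N$ and let $u_j(t)$, $j\in\mathbb Z$, be a solution (on an interval containing $t=0$) of the lattice $$u'_j=u_j(u_{j+p}+\cdots+u_{j+1}-u_{j-1}-\cdots-u_{j-p})$$ satisfying the boundary conditions $u_j=0$ for $j\le 0$ and such that $u_j\ne 0$ for $j>0$. Then it admits the representation $$u_1=f'_1/f_1,\qquad u_j=f'_j/f_j-f'_{j-1}/f_{j-1},\quad j>1,$$ where the functions $f_j$, $j\ge -p$, satisfy the bilinear lattice equation $$f_{j-1}f'_j-f'_{j-1}f_j=f_{j-p-1}f_{j+p},\qquad j=1,2,\dots,$$ with $f_{-p}=\dots=f_0=1$ and $f_1(0)=\dots=f_p(0)=1$.
   Context: $f'=df/dt$. *)

(* Defs.v *)
From Stdlib Require Export Reals ZArith.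
From Coquelicot Require Export Coquelicot.
Open Scope R_scope.

(* Right-hand side of the lattice: sum_{k=1}^{p} (u_{j+k} - u_{j-k}) at time t
   (for p >= 1). *)
Definition lattice_sum (p : nat) (u : Z -> R -> R) (j : Z) (t : R) : R :=
  sum_f_R0 (fun k => u (j + Z.of_nat (S k))%Z t - u (j - Z.of_nat (S k))%Z t)
           (Nat.pred p).

(* Main.v *)
Require Import Defs.
From Stdlib Require Import Reals ZArith Lra Lia.
From Coquelicot Require Import Coquelicot.
Open Scope R_scope.

Fixpoint Sn (u : Z -> R -> R) (n : nat) (t : R) : R :=
  match n with O => 0 | S n => Sn u n t + u (Z.of_nat (S n)) t end.
Definition SS u (j : Z) t := Sn u (Z.to_nat j) t.
Definition EE u (j : Z) t := exp (RInt (SS u j) 0 t).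

Lemma SS_diff (a b : R) (u : Z -> R -> R)
  (Hbd : forall (j : Z) (t : R), (j <= 0)%Z -> a < t < b -> u j t = 0) :
  forall j t, a < t < b -> u j t = SS u j t - SS u (j - 1) t.
Proof.
  intros j t Ht. unfold SS.
  destruct (Z_le_gt_dec j 0) as [H|H].
  - rewrite Hbd by auto. replace (Z.to_nat j) with O by lia.
    replace (Z.to_nat (j-1)) with O by lia. simpl; lra.
  - replace (Z.to_nat j) with (S (Z.to_nat (j-1))) by lia. cbn [Sn].
    replace (Z.of_nat (S (Z.to_nat (j - 1)))) with j by lia. lra.
Qed.

Lemma Sn_cont (a b : R) (u : Z -> R -> R)
  (Hdiff : forall (j : Z) (t : R), a < t < b -> ex_derive (u j) t) :
  forall n t, a < t < b -> continuous (Sn u n) t.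
Proof.
  induction n; intros t Ht.
  - simpl. apply continuous_const.
  - apply (continuous_ext (fun x => plus (Sn u n x) (u (Z.of_nat (S n)) x))).
    + intros; reflexivity.
    + apply (continuous_plus (Sn u n) (u (Z.of_nat (S n))) t); auto.
      apply ex_derive_continuous; auto.
Qed.

Lemma E_deriv (a b : R) (u : Z -> R -> R)
  (Hdiff : forall (j : Z) (t : R), a < t < b -> ex_derive (u j) t)
  (Hab : a < 0 < b) :
  forall j t, a < t < b -> is_derive (EE u j) t (SS u j t * EE u j t).
Proof.
  intros j t Ht. unfold EE.
  assert (H := is_derive_comp exp (fun t => RInt (SS u j) 0 t) t
      (exp (RInt (SS u j) 0 t)) (SS u j t) (is_derive_exp _)).
  apply H.
  apply (is_derive_RInt (SS u j) (fun t => RInt (SS u j) 0 t) 0 t).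
  - apply (locally_interval _ t a b); simpl; try lra.
    intros y Hy1 Hy2. apply (@RInt_correct R_CompleteNormedModule).
    apply (@ex_RInt_continuous R_CompleteNormedModule).
    intros z Hz. apply (Sn_cont a b u Hdiff).
    unfold Rmin, Rmax in Hz; destruct (Rle_dec 0 y); lra.
  - apply (Sn_cont a b u Hdiff); auto.
Qed.

Lemma EE_0 u j : EE u j 0 = 1.
Proof. unfold EE. rewrite RInt_point. apply exp_0. Qed.

Lemma EE_nz u j t : EE u j t <> 0.
Proof. unfold EE. apply Rgt_not_eq, exp_pos. Qed.

Lemma const_lemma (a b : R) (g : R -> R) (Hab : a < 0 < b) :
  (forall x, a < x < b -> is_derive g x 0) -> forall t, a < t < b -> g t = g 0.
Proof.
  intros H t Ht.
  destruct (MVT_gen g 0 t (fun _ => 0)) as [c [_ Hc]].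
  - intros x Hx. apply H. unfold Rmin, Rmax in Hx; destruct (Rle_dec 0 t); lra.
  - intros x Hx. apply continuity_pt_filterlim. apply (@ex_derive_continuous R_AbsRing R_NormedModule).
    exists 0. apply H. unfold Rmin, Rmax in Hx; destruct (Rle_dec 0 t); lra.
  - lra.
Qed.

Lemma lsum_eq (a b : R) (u : Z -> R -> R)
  (Hbd : forall (j : Z) (t : R), (j <= 0)%Z -> a < t < b -> u j t = 0) :
  forall q j t, a < t < b ->
  sum_f_R0 (fun k => u (j + Z.of_nat (S k))%Z t - u (j - Z.of_nat (S k))%Z t) q
  = SS u (j + Z.of_nat (S q))%Z t - SS u j t - SS u (j - 1)%Z t
    + SS u (j - Z.of_nat (S q) - 1)%Z t.
Proof.
  intros q j t Ht. pose proof (SS_diff a b u Hbd) as K.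
  induction q.
  - simpl sum_f_R0. rewrite (K (j + 1)%Z t Ht), (K (j - 1)%Z t Ht).
    replace (j + 1 - 1)%Z with j by lia.
    replace (j + Z.of_nat 1)%Z with (j + 1)%Z by lia.
    replace (j - Z.of_nat 1 - 1)%Z with (j - 1 - 1)%Z by lia. lra.
  - rewrite tech5, IHq. cbv beta.
    rewrite (K (j + Z.of_nat (S (S q)))%Z t Ht), (K (j - Z.of_nat (S (S q)))%Z t Ht).
    replace (j + Z.of_nat (S (S q)) - 1)%Z with (j + Z.of_nat (S q))%Z by lia.
    replace (j - Z.of_nat (S q) - 1)%Z with (j - Z.of_nat (S (S q)))%Z by lia.
    lra.
Qed.

Definition nextc (p : nat) (w : nat -> R) (h : nat -> R) (n : nat) : R :=
  if Nat.leb n (2*p) then 1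
  else h (n-p-1)%nat * h (n-p)%nat * w (n-2*p)%nat / h (n-2*p-1)%nat.

Fixpoint hist (p : nat) (w : nat -> R) (n : nat) : nat -> R :=
  match n with
  | O => fun _ => 1
  | S n => fun k => if Nat.eqb k n then nextc p w (hist p w n) n else hist p w n k
  end.

Definition cc p w n := hist p w (S n) n.

Lemma hist_spec p w : forall n k, (k < n)%nat -> hist p w n k = cc p w k.
Proof.
  induction n; intros k Hk; [lia|].
  simpl. destruct (Nat.eqb_spec k n).
  - subst. unfold cc. simpl. rewrite Nat.eqb_refl. reflexivity.
  - apply IHn. lia.
Qed.

Lemma cc_unfold p w : (1 <= p)%nat -> forall n, cc p w n = nextc p w (cc p w) n.
Proof.
  intros Hp n. unfold cc at 1. simpl. rewrite Nat.eqb_refl.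
  unfold nextc. destruct (Nat.leb n (2*p)) eqn:E; auto.
  apply Nat.leb_gt in E.
  rewrite !hist_spec by lia. reflexivity.
Qed.

Lemma cc_small p w : (1 <= p)%nat -> forall n, (n <= 2*p)%nat -> cc p w n = 1.
Proof.
  intros Hp n Hn. rewrite cc_unfold by auto. unfold nextc.
  apply Nat.leb_le in Hn. rewrite Hn. reflexivity.
Qed.

Lemma cc_nz p w : (1 <= p)%nat -> (forall m, (1 <= m)%nat -> w m <> 0) ->
  forall n, cc p w n <> 0.
Proof.
  intros Hp Hw n. induction n as [n IH] using (well_founded_induction lt_wf).
  rewrite cc_unfold by auto. unfold nextc.
  destruct (Nat.leb n (2*p)) eqn:E; [lra|].
  apply Nat.leb_gt in E.
  unfold Rdiv. repeat apply Rmult_integral_contrapositive_currified.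
  - apply IH; lia.
  - apply IH; lia.
  - apply Hw; lia.
  - apply Rinv_neq_0_compat. apply IH; lia.
Qed.

Lemma cc_rec p w : (1 <= p)%nat -> (forall m, (1 <= m)%nat -> w m <> 0) ->
  forall n, (2*p < n)%nat ->
  cc p w n * cc p w (n-2*p-1)%nat = cc p w (n-p-1)%nat * cc p w (n-p)%nat * w (n-2*p)%nat.
Proof.
  intros Hp Hw n Hn. rewrite (cc_unfold p w Hp n). unfold nextc.
  destruct (Nat.leb n (2*p)) eqn:E; [apply Nat.leb_le in E; lia|].
  field. apply cc_nz; auto.
Qed.

Lemma is_derive_eq (f : R -> R) x l l' : is_derive f x l -> l = l' -> is_derive f x l'.
Proof. intros H ->. exact H. Qed.

Lemma ratio_lemma (q : nat) (a b : R) (u : Z -> R -> R)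
  (Hab : a < 0 < b)
  (Hdiff : forall (j : Z) (t : R), a < t < b -> ex_derive (u j) t)
  (Hode : forall (j : Z) (t : R), a < t < b ->
     Derive (u j) t = u j t * lattice_sum (S q) u j t)
  (Hbd : forall (j : Z) (t : R), (j <= 0)%Z -> a < t < b -> u j t = 0) :
  forall j t, a < t < b ->
  u j t * EE u (j - 1) t * EE u j t =
  u j 0 * EE u (j - Z.of_nat (S q) - 1) t * EE u (j + Z.of_nat (S q)) t.
Proof.
  intros j t Ht.
  set (g := fun t => u j t * (EE u (j - 1) t * EE u j t) /
                     (EE u (j - Z.of_nat (S q) - 1) t * EE u (j + Z.of_nat (S q)) t)).
  assert (G : g t = g 0).
  { apply (const_lemma a b g Hab); auto.
    intros x Hx.
    pose proof (E_deriv a b u Hdiff Hab (j-1)%Z x Hx) as D1.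
    pose proof (E_deriv a b u Hdiff Hab j x Hx) as D2.
    pose proof (E_deriv a b u Hdiff Hab (j - Z.of_nat (S q) - 1)%Z x Hx) as D3.
    pose proof (E_deriv a b u Hdiff Hab (j + Z.of_nat (S q))%Z x Hx) as D4.
    pose proof (Derive_correct _ _ (Hdiff j x Hx)) as Du.
    rewrite Hode in Du by auto.
    unfold lattice_sum in Du. simpl Nat.pred in Du.
    rewrite (lsum_eq a b u Hbd q j x Hx) in Du.
    pose proof (is_derive_mult _ _ _ _ _ D1 D2 Rmult_comm) as D12.
    pose proof (is_derive_mult _ _ _ _ _ Du D12 Rmult_comm) as DN.
    pose proof (is_derive_mult _ _ _ _ _ D3 D4 Rmult_comm) as DD.
    pose proof (is_derive_div _ _ _ _ _ DN DD) as Dg.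
    unfold g. eapply is_derive_eq. apply Dg.
    - apply Rmult_integral_contrapositive_currified; apply EE_nz.
    - simpl. unfold plus, mult; simpl. unfold Rdiv.
      match goal with |- ?X * _ = 0 => replace X with 0 by ring end. ring. }
  unfold g in G. rewrite !EE_0 in G.
  replace (u j 0) with (u j 0 * (1 * 1) / (1 * 1)) by field. rewrite <- G.
  field. split; apply EE_nz.
Qed.
Theorem proposition2 (p : nat) (a b : R) (u : Z -> R -> R)
  (Hp : (1 <= p)%nat)
  (Hab : a < 0 < b)
  (Hdiff : forall (j : Z) (t : R), a < t < b -> ex_derive (u j) t)
  (Hode : forall (j : Z) (t : R), a < t < b ->
     Derive (u j) t = u j t * lattice_sum p u j t)
  (Hbd : forall (j : Z) (t : R), (j <= 0)%Z -> a < t < b -> u j t = 0)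
  (Hnz : forall (j : Z) (t : R), (0 < j)%Z -> a < t < b -> u j t <> 0) :
  exists f : Z -> R -> R,
    (forall (j : Z) (t : R), (- Z.of_nat p <= j)%Z -> a < t < b ->
        ex_derive (f j) t /\ f j t <> 0) /\
    (forall t : R, a < t < b -> u 1%Z t = Derive (f 1%Z) t / f 1%Z t) /\
    (forall (j : Z) (t : R), (1 < j)%Z -> a < t < b ->
        u j t = Derive (f j) t / f j t - Derive (f (j - 1)%Z) t / f (j - 1)%Z t) /\
    (forall (j : Z) (t : R), (1 <= j)%Z -> a < t < b ->
        f (j - 1)%Z t * Derive (f j) t - Derive (f (j - 1)%Z) t * f j t
        = f (j - Z.of_nat p - 1)%Z t * f (j + Z.of_nat p)%Z t) /\
    (forall (j : Z) (t : R), (- Z.of_nat p <= j <= 0)%Z -> a < t < b -> f j t = 1) /\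
    (forall j : Z, (1 <= j <= Z.of_nat p)%Z -> f j 0 = 1).
Proof.
  destruct p as [|q]; [lia|].
  set (w := fun m : nat => u (Z.of_nat m) 0).
  assert (Hw : forall m, (1 <= m)%nat -> w m <> 0).
  { intros m Hm. unfold w. apply Hnz; [lia|lra]. }
  set (C := fun j : Z => cc (S q) w (Z.to_nat (j + Z.of_nat (S q)))).
  assert (Cnz : forall j, C j <> 0) by (intro; apply cc_nz; auto; lia).
  assert (Crec : forall j, (1 <= j)%Z ->
     C (j - 1)%Z * C j * u j 0 = C (j - Z.of_nat (S q) - 1)%Z * C (j + Z.of_nat (S q))%Z).
  { intros j Hj. unfold C.
    set (n := Z.to_nat (j + Z.of_nat (S q) + Z.of_nat (S q))).
    pose proof (cc_rec (S q) w ltac:(lia) Hw n ltac:(lia)) as H.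
    replace (Z.to_nat (j - 1 + Z.of_nat (S q))) with (n - S q - 1)%nat by lia.
    replace (Z.to_nat (j + Z.of_nat (S q))) with (n - S q)%nat by lia.
    replace (Z.to_nat (j - Z.of_nat (S q) - 1 + Z.of_nat (S q))) with (n - 2 * S q - 1)%nat by lia.
    replace (Z.to_nat (j + Z.of_nat (S q) + Z.of_nat (S q))) with n by reflexivity.
    replace (u j 0) with (w (n - 2 * S q)%nat).
    - rewrite <- H. ring.
    - unfold w. f_equal. lia. }
  set (f := fun j t => C j * EE u j t).
  assert (Df : forall j t, a < t < b -> is_derive (f j) t (C j * (SS u j t * EE u j t))).
  { intros j t Ht. apply is_derive_scal. apply (E_deriv a b u Hdiff Hab); auto. }
  assert (DF : forall j t, a < t < b -> Derive (f j) t = C j * (SS u j t * EE u j t)).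
  { intros j t Ht. apply is_derive_unique. apply Df; auto. }
  exists f. split; [|split; [|split; [|split; [|split]]]].
  - intros j t _ Ht. split.
    + eexists. apply Df; auto.
    + unfold f. apply Rmult_integral_contrapositive_currified; auto. apply EE_nz.
  - intros t Ht. rewrite DF by auto. unfold f.
    rewrite (SS_diff a b u Hbd 1 t Ht).
    change (SS u (1 - 1) t) with 0. field. split; auto. apply EE_nz.
  - intros j t Hj Ht. rewrite !DF by auto. unfold f.
    rewrite (SS_diff a b u Hbd j t Ht).
    field. pose proof (EE_nz u j t). pose proof (EE_nz u (j-1) t).
    pose proof (Cnz j). pose proof (Cnz (j-1)%Z). tauto.
  - intros j t Hj Ht. rewrite !DF by auto. unfold f.
    pose proof (ratio_lemma q a b u Hab Hdiff Hode Hbd j t Ht) as Rt.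
    pose proof (SS_diff a b u Hbd j t Ht) as Sd.
    transitivity (C (j-1)%Z * C j * (u j t * EE u (j - 1) t * EE u j t)).
    + rewrite Sd. ring.
    + rewrite Rt.
      transitivity (C (j - 1)%Z * C j * u j 0 * EE u (j - Z.of_nat (S q) - 1) t
                    * EE u (j + Z.of_nat (S q)) t); [ring|].
      rewrite (Crec j Hj). ring.
  - intros j t Hj Ht. unfold f, C.
    rewrite cc_small by lia.
    unfold EE. rewrite (RInt_ext (SS u j) (fun _ => 0)).
    2:{ intros x _. unfold SS. replace (Z.to_nat j) with O by lia. reflexivity. }
    rewrite RInt_const. unfold scal; simpl; unfold mult; simpl. rewrite Rmult_0_r, exp_0. ring.
  - intros j Hj. unfold f, C. rewrite cc_small by lia. rewrite EE_0. ring.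
Qed.
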